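(* Let $n\ge k\ge d$ be positive integers. Then every function $f:\{-1,1\}^n\to\mathbb{R}$ of degree at most $k$ satisfies $$\max\Big\{ \big\| \widehat{\mathrm{Rad}_{\leq d}(f)} \big\|_{\ell_2^{m}},\ \sigma(k,d)^{-1} \big\| \widehat{\mathrm{Rad}_{\leq d}(f)} \big\|_{\ell_{\frac{2d}{d+1}}^{m}} \Big\} \leq \inf_{g\in\mathscr{P}_{>d}^n\cap\mathscr{P}_{\leq k}^n} \|f-g\|_\infty,$$ where $m=\binom n0+\cdots+\binom nd$, $\widehat{\mathrm{Rad}_{\le d}(f)}=(\widehat f(S))_{|S|\le d}\in\mathbb{R}^m$, and $\sigma(k,d)=\mathsf{B}_d\sum_{\ell=0}^d|\tilde c(k,\ell)|$.
   Context: Every $f:\{-1,1\}^n\to\mathbb{R}$ has a unique expansion $f=\sum_S\widehat f(S)w_S$ with $w_S(x)=\prod_{i\in S}x_i$; $f$ has degree at most $k$ if $\widehat f(S)=0$ for $|S|>k$. $\mathscr{P}^n_{>d}=\{g:\widehat g(S)=0\text{ for }|S|\le d\}$, $\mathscr{P}^n_{\le k}=\{g:\widehat g(S)=0\text{ for }|S|>k\}$. $\mathrm{Rad}_{\le d}f=\sum_{|S|\le d}\widehat f(S)w_S$. $\|\cdot\|_\infty$ is the sup norm on $\{-1,1\}^n$. $\mathsf{B}_d$ is the least constant such that for every $n\ge d$, every $h:\{-1,1\}^n\to\mathbb{R}$ of degree at most $d$ satisfies $\big(\sum_{S}|\widehat h(S)|^{\frac{2d}{d+1}}\big)^{\frac{d+1}{2d}}\le\mathsf{B}_d\|h\|_\infty$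 (this constant is known to be finite: discrete Bohnenblust–Hille inequality). Let $T_k(x)=\sum_{\ell=0}^k c(k,\ell)x^\ell$ be the $k$-th Chebyshev polynomial of the first kind, $T_k(\cos\theta)=\cos(k\theta)$; define $\tilde c(k,\ell)=c(k,\ell)$ if $k-\ell$ is even and $\tilde c(k,\ell)=c(k-1,\ell)$ if $k-\ell$ is odd. *)

(* Defs.v *)
From HB Require Import structures.
From mathcomp Require Import all_boot all_order all_algebra.
From mathcomp Require Import all_classical all_reals all_analysis.
Set Implicit Arguments. Unset Strict Implicit. Unset Printing Implicit Defensive.
Import Order.TTheory GRing.Theory Num.Theory.
Local Open Scope classical_set_scope.
Local Open Scope ring_scope.

(* The Boolean cube {-1,1}^n: a point is x : {ffun 'I_n -> bool},
   whose i-th coordinate is x_i = -1 if x i = true and x_i = 1 otherwise. *)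
Definition cube (n : nat) := {ffun 'I_n -> bool}.

Definition coord {R : realType} {n : nat} (x : cube n) (i : 'I_n) : R :=
  if x i then -1 else 1.

Definition walsh {R : realType} {n : nat} (S : {set 'I_n}) (x : cube n) : R :=
  \prod_(i in S) coord x i.

(* Fourier--Walsh coefficient: the unique coefficients of the expansion
   f = sum_S fhat(S) w_S, given by fhat(S) = 2^{-n} sum_x f(x) w_S(x). *)
Definition fhat {R : realType} {n : nat} (f : cube n -> R) (S : {set 'I_n}) : R :=
  (2 ^+ n)^-1 * \sum_(x : cube n) f x * walsh S x.

Definition deg_le {R : realType} {n : nat} (f : cube n -> R) (k : nat) : Prop :=
  forall S : {set 'I_n}, (k < #|S|)%N -> fhat f S = 0.

Definition high_deg {R : realType} {n : nat} (g : cube n -> R) (d : nat) : Prop :=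
  forall S : {set 'I_n}, (#|S| <= d)%N -> fhat g S = 0.

Definition supnorm {R : realType} {n : nat} (f : cube n -> R) : R :=
  \big[Num.max/0]_(x : cube n) `|f x|.

Definition lp_low {R : realType} {n : nat} (p : R) (f : cube n -> R) (d : nat) : R :=
  (\sum_(S : {set 'I_n} | (#|S| <= d)%N) `|fhat f S| `^ p) `^ (p^-1).

Definition l2_low {R : realType} {n : nat} (f : cube n -> R) (d : nat) : R :=
  Num.sqrt (\sum_(S : {set 'I_n} | (#|S| <= d)%N) fhat f S ^+ 2).

Definition bh_exp {R : realType} (d : nat) : R := (2 * d)%:R / (d.+1)%:R.

Definition BH_consts (R : realType) (d : nat) : set R :=
  [set B | forall (n : nat), (d <= n)%N -> forall h : cube n -> R, deg_le h d ->
      lp_low (bh_exp d) h d <= B * supnorm h].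

Definition BH (R : realType) (d : nat) : R := inf (@BH_consts R d).

(* Chebyshev polynomials of the first kind (standard three-term recurrence,
   equivalently T_k(cos t) = cos(k t)). *)
Fixpoint cheb_pair {R : realType} (k : nat) : {poly R} * {poly R} :=
  match k with
  | 0 => (1, 'X)
  | k'.+1 => let p := cheb_pair k' in (p.2, 2%:P * 'X * p.2 - p.1)
  end.
Definition cheb {R : realType} (k : nat) : {poly R} := (cheb_pair k).1.

Definition cheb_c {R : realType} (k l : nat) : R := (cheb k)`_l.

Definition cheb_ct {R : realType} (k l : nat) : R :=
  if odd (k - l) then cheb_c k.-1 l else cheb_c k l.

Definition sigma (R : realType) (k d : nat) : R :=
  @BH R d * \sum_(l < d.+1) `|@cheb_ct R k l|.

(* Main.v *)
Require Import Defs.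
From HB Require Import structures.
From mathcomp Require Import all_boot all_order all_algebra.
From mathcomp Require Import all_classical all_reals all_analysis.
From mathcomp Require Import ring lra zify.
Import Order.TTheory GRing.Theory Num.Theory.
Local Open Scope ring_scope.

Section Markov.
Variable R : realType.

Lemma sign_prod_XsubC (s : seq R) : all (fun r => 0 <= r) s ->
  forall l, 0 <= (-1)^+(size s + l) * (\prod_(r <- s) ('X - r%:P))`_l.
Proof.
elim: s => [|r s IH] /=.
  move=> _ l; rewrite big_nil coef1; case: l => [|l] /=; first by rewrite expr0 mul1r.
  by rewrite mulr0.
move=> /andP[r0 hs] l; rewrite big_cons mulrBl coefB coefXM coefCM.
have IHs := IH hs.
case: l => [|l] /=.
  rewrite addn0 exprS.
  have h := IHs 0%N; rewrite addn0 in h.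
  set sg := (-1) ^+ size s in h *; set q := _`_0 in h *.
  nra.
have h1 := IHs l. have h2 := IHs l.+1.
rewrite addSn addnS !exprS.
rewrite addnS exprS in h2.
set sg := (-1) ^+ (size s + l) in h1 h2 *.
set q1 := _`_l in h1 *. set q2 := _`_l.+1 in h2 *.
nra.
Qed.


Lemma sign_count (m j : nat) : (j <= m)%N ->
  \prod_(k < m.+1 | k != j :> nat) (if (k < j)%N then -1 else 1) = (-1)^+j :> R.
Proof.
move=> hj.
rewrite -(big_mkord (fun k => k != j) (fun k => if (k < j)%N then -1 else 1)).
rewrite (big_cat_nat _ (n:=j)) //=; last by apply: leqW.
rewrite [X in _ * X]big_nat_cond [X in _ * X]big1; last first.
  by move=> k /andP[] /andP[] jk _ _; rewrite ltnNge jk.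
rewrite mulr1.
rewrite big_nat_cond (eq_bigl (fun k => (0 <= k < j)%N && true)); last first.
  move=> k; rewrite andbT; have [kj|kj] := ltnP k j; rewrite ?andbT ?andbF //=.
  by rewrite neq_ltn kj.
rewrite (eq_bigr (fun _ => -1)); last by move=> k; rewrite andbT => /andP[_ ->].
rewrite -(@big_nat_cond _ _ _ 0 j xpredT).
by rewrite prodr_const_nat subn0.
Qed.


Lemma sign_sq (j : nat) : (-1)^+j * (-1)^+j = 1 :> R.
Proof. by rewrite -exprD addnn -mul2n exprM sqrrN !expr1n. Qed.

Lemma lagrange_bound (m : nat) (x : nat -> R) (P Q : {poly R}) (M : R) (i : nat) :
  injective x -> (forall j, (j <= m)%N -> 0 <= x j) ->
  (forall j j', (j < j')%N -> (j' <= m)%N -> x j' < x j) ->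
  (size P <= m.+1)%N -> (size Q <= m.+1)%N -> 0 <= M ->
  (forall j, (j <= m)%N -> `|P.[x j]| <= M * `|Q.[x j]|) ->
  (forall j, (j <= m)%N -> 0 <= (-1)^+j * Q.[x j]) ->
  `|P`_i| <= M * `|Q`_i|.
Proof.
move=> xinj x0 xdec sP sQ M0 hPQ hQ.
have n0 : (0 < m.+1)%N by [].
pose lam (j : 'I_m.+1) := (tnth (m.+1.-lagrange x) j)`_i.
have coefE (p : {poly R}) : (size p <= m.+1)%N -> p`_i = \sum_(j < m.+1) p.[x j] * lam j.
  move=> sp; rewrite {1}(lagrange_gen n0 xinj sp) coef_sum.
  by apply: eq_bigr => j _; rewrite coefCM.
have sgn (j : 'I_m.+1) : 0 <= (-1)^+(m + i) * ((-1)^+j * lam j).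
  rewrite /lam lagrangeE //= coefCM.
  set p := \prod_(k < m.+1 | k != j) _.
  have hnum : 0 <= (-1)^+(m + i) * p`_i.
    have -> : p = \prod_(r <- [seq x (val k) | k <- enum [pred k : 'I_m.+1 | k != j]]) ('X - r%:P).
      by rewrite big_map big_enum; apply: eq_bigl => k.
    have := @sign_prod_XsubC [seq x (val k) | k <- enum [pred k : 'I_m.+1 | k != j]].
    rewrite size_map -cardE cardC1 card_ord /=; apply.
    apply/allP => r /mapP[k _ ->]; apply: x0; rewrite -ltnS; exact: ltn_ord.
  have hden : 0 < (-1)^+j * p.[x j].
    have hj : (j <= m)%N by rewrite -ltnS; exact: ltn_ord.
    rewrite /p horner_prod -(@sign_count m j hj) -big_split /=; apply: prodr_gt0 => k kj.
    rewrite hornerXsubC.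
    have hk : (k <= m)%N by rewrite -ltnS; exact: ltn_ord.
    case: ltnP => [kj'|jk].
      by rewrite mulN1r oppr_gt0 subr_lt0; apply: xdec.
    rewrite mul1r subr_gt0; apply: xdec => //.
    by rewrite ltn_neqAle jk andbT eq_sym.
  set D := p.[x j] in hden *.
  rewrite [X in 0 <= X](_ : _ = ((-1)^+(m + i) * p`_i) * ((-1)^+j * D)^-1).
    by apply: mulr_ge0 => //; rewrite invr_ge0 ltW.
  by rewrite invfM -exprVn invrN1; ring.
rewrite (coefE P sP) (coefE Q sQ).
apply: le_trans (ler_norm_sum _ _ _) _.
apply: (@le_trans _ _ (\sum_(j < m.+1) M * ((-1)^+(m + i) * (Q.[x j] * lam j)))).
  apply: ler_sum => j _.
  have hj : (j <= m)%N by rewrite -ltnS; exact: ltn_ord.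
  rewrite normrM.
  have e1 : `|Q.[x j]| = (-1)^+j * Q.[x j].
    by rewrite -(ger0_norm (hQ j hj)) normrM normrX normrN1 expr1n mul1r.
  have e2 : `|lam j| = (-1)^+(m + i) * ((-1)^+j * lam j).
    by rewrite -(ger0_norm (sgn j)) !normrM !normrX normrN1 !expr1n !mul1r.
  apply: (@le_trans _ _ (M * `|Q.[x j]| * `|lam j|)).
    by apply: ler_wpM2r => //; apply: hPQ.
  rewrite e1 e2 -mulrA; apply: ler_wpM2l => //.
  rewrite [X in X <= _](_ : _ = ((-1)^+j * (-1)^+j) * ((-1) ^+ (m + i) * (Q.[x j] * lam j))); last by ring.
  by rewrite sign_sq mul1r.
rewrite -mulr_sumr; apply: ler_wpM2l => //.
rewrite -mulr_sumr; apply: le_trans (ler_norm _) _.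
by rewrite normrM normrX normrN1 expr1n mul1r.
Qed.


Lemma cheb0 : cheb 0 = 1 :> {poly R}. Proof. by []. Qed.
Lemma cheb1 : cheb 1 = 'X :> {poly R}. Proof. by []. Qed.
Lemma chebSS k : cheb k.+2 = 2%:P * 'X * cheb k.+1 - cheb k :> {poly R}.
Proof. by []. Qed.

Lemma cheb_cos k (t : R) : (cheb k).[cos t] = cos (k%:R * t).
Proof.
suff H : forall k, (cheb k).[cos t] = cos (k%:R * t) /\ (cheb k.+1).[cos t] = cos (k.+1%:R * t).
  by case: (H k).
move=> {k}; elim=> [|k [IH1 IH2]].
  by rewrite cheb0 cheb1 hornerC hornerX mul0r cos0 mul1r.
split => //.
rewrite chebSS !hornerE IH1 IH2.
have e1 : k.+2%:R * t = k.+1%:R * t + t by rewrite -addn1 natrD mulrDl mul1r.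
have e2 : k%:R * t = k.+1%:R * t - t by rewrite -addn1 natrD mulrDl mul1r addrK.
rewrite e1 e2 cosB cosD; ring.
Qed.

Lemma cheb_size k j : (k < j)%N -> (cheb k)`_j = 0 :> R.
Proof.
suff H : forall k, (forall j, (k < j)%N -> (cheb k)`_j = 0 :> R) /\
                   (forall j, (k.+1 < j)%N -> (cheb k.+1)`_j = 0 :> R).
  by case: (H k) => H1 _; apply: H1.
move=> {k j}; elim=> [|k [IH1 IH2]].
  split=> j hj; first by rewrite cheb0 coef1; case: j hj.
  by rewrite cheb1 coefX; case: j hj => // [[|j]].
split => // j hj.
rewrite chebSS coefB -mulrA coefCM coefXM.
case: j hj => [|j] hj //=.
rewrite IH2 ?IH1 ?mulr0 ?subr0 //; last by apply: ltn_trans hj.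
Qed.

Lemma cos_addnpi (t : R) j : cos (t + j%:R * pi) = (-1)^+j * cos t.
Proof.
elim: j => [|j IH]; first by rewrite mul0r addr0 expr0 mul1r.
by rewrite -addn1 natrD mulrDl mul1r addrA cosDpi IH exprD expr1 mulrN1 mulNr.
Qed.


Lemma sum_pairs (F : nat -> R) W :
  \sum_(j < W.*2) F j = \sum_(u < W) (F u.*2 + F u.*2.+1).
Proof.
elim: W => [|W IH]; first by rewrite !big_ord0.
by rewrite doubleS !big_ord_recr /= IH addrA.
Qed.

Lemma parity_part (q : {poly R}) (kk : nat) (s : R) :
  (forall j, (kk < j)%N -> odd j = odd kk -> q`_j = 0) ->
  (q.[s] + (-1)^+(odd kk) * q.[-s]) / 2 =
    s^+(odd kk) * (\poly_(u < (kk./2).+1) q`_(odd kk + u.*2)).[s^+2].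
Proof.
move=> hq.
have hk := odd_double_half kk.
move: (odd kk) (kk./2) hq hk => e mm hq hk.
pose W := (size q + mm).+1.
have sW : (size q <= W.*2)%N by rewrite /W -addnn; lia.
rewrite (horner_coef_wide s sW) (horner_coef_wide (-s) sW) mulr_sumr -big_split /=.
rewrite (sum_pairs (fun i => q`_i * s ^+ i + (-1) ^+ e * (q`_i * (- s) ^+ i))) mulr_suml horner_poly mulr_sumr.
have hmW : (mm.+1 <= W)%N by rewrite /W; lia.
rewrite (big_ord_widen W (fun u => s ^+ e * (q`_(e + u.*2) * (s ^+ 2) ^+ u)) hmW) [RHS]big_mkcond /=.
apply: eq_bigr => u _.
rewrite !(exprNn s) -!(signr_odd _ u.*2.+1) -!(signr_odd _ u.*2) /= odd_double /= expr0 expr1 !mul1r.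
rewrite -exprM mul2n.
have h2 : (2 : R) != 0 by rewrite pnatr_eq0.
rewrite (exprS s (u.*2)).
set z := s ^+ u.*2; set a := q`_u.*2; set b := q`_u.*2.+1.
case: ltnP => hu.
  case: e hq hk => hq hk /=; rewrite ?expr0 ?expr1 ?add0n ?add1n -/b -/a; by field.
have hz : q`_(e + u.*2) = 0.
  apply: hq; last by rewrite oddD odd_double addbF; case: (e).
  rewrite -hk addnC; lia.
case: e hq hk hz => hq hk /= hz; rewrite ?add1n ?add0n -/a -/b in hz; 
  rewrite hz ?expr0 ?expr1; by field.
Qed.


Lemma markov (p : {poly R}) (k l : nat) (M : R) :
  (size p <= k.+1)%N -> (l <= k)%N ->
  (forall t, -1 <= t <= 1 -> `|p.[t]| <= M) ->
  `|p`_l| <= M * `|cheb_ct k l|.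
Proof.
move=> sp lk hM.
have M0 : 0 <= M.
  apply: le_trans (hM 0 _); first exact: normr_ge0.
  by apply/andP; split; lra.
pose kk := if odd (k - l) then k.-1 else k.
have ct : @cheb_ct R k l = @cheb_c R kk l by rewrite /cheb_ct /kk; case: ifP.
have [hlk [hpar hvan]] : [/\ (l <= kk)%N, odd kk = odd l &
    forall j, (kk < j)%N -> odd j = odd kk -> p`_j = 0].
  rewrite /kk; case: ifP => h.
    have lk' : (l < k)%N by rewrite ltn_neqAle lk andbT; apply/negP => /eqP e; rewrite e subnn in h.
    have ok : odd k = ~~ odd l by move: h; rewrite oddB //; case: (odd k); case: (odd l).
    have ok1 : odd k.-1 = odd l.
      by move: ok; case: (k) lk' => // k' _ /=; case: (odd k'); case: (odd l).
    split => //; first by case: (k) lk' => // k' /=.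
    move=> j hj hoj; apply/(leq_sizeP _ _ sp).
    have : j != k by apply/eqP => e; move: hoj; rewrite e ok ok1; case: (odd l).
    by case: (k) hj => [|k'] /= hj hjk; lia.
  have ok : odd k = odd l by move: h; rewrite oddB //; case: (odd k); case: (odd l).
  split => // j hj _; apply/(leq_sizeP _ _ sp); exact: hj.
have hoddl := odd_double_half l.
have hoddk := odd_double_half kk.
have PP s : (p.[s] + (-1)^+(odd kk) * p.[-s]) / 2 =
    s^+(odd kk) * (\poly_(u < (kk./2).+1) p`_(odd kk + u.*2)).[s^+2].
  exact: (parity_part p kk s hvan).
have QQ s := parity_part (cheb kk) kk s (fun j hj _ => cheb_size kk j hj).
move: (kk./2) PP QQ hoddk => mm PP QQ hoddk.
set P := \poly_(u < mm.+1) _ in PP.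
set Q := \poly_(u < mm.+1) _ in QQ.
pose th (j : nat) : R := j%:R * pi / kk%:R.
pose x j := if (j <= mm)%N then cos (th j) ^+ 2 else - j%:R.
have pi0 := @pi_gt0 R.
have th_range j : (j <= mm)%N -> 0 <= th j <= pi / 2.
  move=> hj; case: (posnP kk) => hk0.
    by rewrite /th hk0 invr0 mulr0; apply/andP; split => //; lra.
  have h2 : (j.*2 <= kk)%N by lia.
  have h2R : 2 * j%:R <= kk%:R :> R by rewrite -natrM ler_nat mul2n.
  have kR : 0 < kk%:R :> R by rewrite ltr0n.
  apply/andP; split.
    by rewrite /th; apply: divr_ge0 => //; apply: mulr_ge0 => //; exact: ltW.
  by rewrite /th ler_pdivrMr //; nra.
have cosge0 j : (j <= mm)%N -> 0 <= cos (th j).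
  move=> hj; apply: cos_ge0_pihalf; have /andP[a b] := th_range j hj.
  by apply/andP; split => //; lra.
have Cval j : (j <= mm)%N -> cos (kk%:R * th j) = (-1)^+j.
  move=> hj; case: (posnP kk) => hk0.
    have -> : j = 0%N by lia.
    by rewrite /th hk0 !mul0r cos0 expr0.
  have -> : kk%:R * th j = 0 + j%:R * pi.
    by rewrite /th add0r; field; rewrite pnatr_eq0 -lt0n.
  by rewrite cos_addnpi cos0 mulr1.
have Cneg j : (j <= mm)%N -> cos (kk%:R * (th j + pi)) = (-1)^+kk * (-1)^+j.
  by move=> hj; rewrite mulrDr cos_addnpi Cval.
have sgn1 : (-1)^+(odd kk) * (-1)^+kk = 1 :> R.
  by rewrite -[X in _ * X]signr_odd sign_sq.
have Qnode j : (j <= mm)%N -> cos (th j) ^+ (odd kk) * Q.[x j] = (-1)^+j.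
  move=> hj; rewrite /x hj -QQ -[in - cos _]cosDpi !cheb_cos Cval // Cneg //.
  by rewrite mulrA sgn1 mul1r; field.
have Pnode j : (j <= mm)%N -> `|cos (th j) ^+ (odd kk) * P.[x j]| <= M.
  move=> hj; rewrite /x hj -PP.
  have hs1 := cos_geN1 (th j); have hs2 := cos_le1 (th j).
  have ha := hM (cos (th j)) ltac:(apply/andP; split => //).
  have hb := hM (- cos (th j)) ltac:(apply/andP; split; lra).
  have hc : `|(-1) ^+ odd kk| = 1 :> R by rewrite normrX normrN1 expr1n.
  rewrite normrM normfV (@ger0_norm _ 2) // ler_pdivrMr //.
  apply: le_trans (ler_normD _ _) _; rewrite normrM hc mul1r; lra.
have xnn j : (j <= mm)%N -> 0 <= x j by move=> hj; rewrite /x hj sqr_ge0.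
have xdec j j' : (j < j')%N -> (j' <= mm)%N -> x j' < x j.
  move=> hjj hj'; have hj : (j <= mm)%N by apply: leq_trans hj'; apply: ltnW.
  rewrite /x hj hj'.
  have kpos : (0 < kk)%N by lia.
  have kR : 0 < kk%:R :> R by rewrite ltr0n.
  have hth : th j < th j'.
    by rewrite /th ltr_pM2r ?invr_gt0 // ltr_pM2r // ltr_nat.
  have /andP[a1 a2] := th_range j hj; have /andP[b1 b2] := th_range j' hj'.
  have hc : cos (th j') < cos (th j).
    rewrite ltr_cos // in_itv /=; apply/andP; split => //; lra.
  have := cosge0 j' hj'; nra.
have xinj : injective x.
  move=> a b; rewrite /x.
  case: (leqP a mm) => ha; case: (leqP b mm) => hb.
  - move=> e; case: (ltngtP a b) => // hab.
      by have := xdec a b hab hb; rewrite /x ha hb e ltxx.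
    by have := xdec b a hab ha; rewrite /x ha hb e ltxx.
  - move=> e; have : 0 <= - b%:R :> R by rewrite -e sqr_ge0.
    by rewrite oppr_ge0 lern0; lia.
  - move=> e; have : 0 <= - a%:R :> R by rewrite e sqr_ge0.
    by rewrite oppr_ge0 lern0; lia.
  - by move/oppr_inj/eqP; rewrite eqr_nat => /eqP.
have sP : (size P <= mm.+1)%N by apply: size_poly.
have sQ : (size Q <= mm.+1)%N by apply: size_poly.
have hPQ j : (j <= mm)%N -> `|P.[x j]| <= M * `|Q.[x j]|.
  move=> hj; have hq := Qnode j hj; have hp := Pnode j hj.
  have w0 : 0 <= cos (th j) ^+ (odd kk) by apply: exprn_ge0; apply: cosge0.
  set w := cos (th j) ^+ (odd kk) in hq hp w0.
  have hA : w * ((-1)^+j * Q.[x j]) = 1 by rewrite mulrCA hq sign_sq.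
  have eA : `|Q.[x j]| = `|(-1)^+j * Q.[x j]| by rewrite normrM normrX normrN1 expr1n mul1r.
  set A := (-1)^+j * Q.[x j] in hA eA.
  have A0 : 0 <= A by nra.
  rewrite eA (ger0_norm A0).
  rewrite normrM (ger0_norm w0) in hp.
  have := normr_ge0 P.[x j]; nra.
have hQs j : (j <= mm)%N -> 0 <= (-1)^+j * Q.[x j].
  move=> hj; have hq := Qnode j hj.
  have w0 : 0 <= cos (th j) ^+ (odd kk) by apply: exprn_ge0; apply: cosge0.
  set w := cos (th j) ^+ (odd kk) in hq w0.
  have hA : w * ((-1)^+j * Q.[x j]) = 1 by rewrite mulrCA hq sign_sq.
  set A := (-1)^+j * Q.[x j] in hA *; nra.
have := @lagrange_bound mm x P Q M (l./2) xinj xnn xdec sP sQ M0 hPQ hQs.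
have hl2 : (l./2 < mm.+1)%N.
  rewrite hpar in hoddk; move: hoddk hoddl hlk; move: (odd l) => o; lia.
by rewrite !coef_poly hl2 hpar hoddl ct /cheb_c.
Qed.

End Markov.

Section Cube.
Variable R : realType.
Variable n : nat.
Implicit Types (x y : cube n) (S T : {set 'I_n}) (f g h : cube n -> R).

Lemma coord_mul x i : Defs.coord x i * Defs.coord x i = 1 :> R.
Proof. by rewrite /Defs.coord; case: (x i); rewrite ?mulrNN ?mulr1. Qed.

Lemma walshE S x : walsh S x = \prod_i (if i \in S then Defs.coord x i else 1) :> R.
Proof. by rewrite /walsh big_mkcond. Qed.

Lemma sum_cube_prod (F : 'I_n -> bool -> R) :
  \sum_(x : cube n) \prod_i F i (x i) = \prod_i (F i true + F i false).
Proof.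
rewrite -(bigA_distr_bigA (R:=R) (times:=GRing.mul) (plus:=GRing.add)).
by apply: eq_bigr => i _; rewrite big_bool.
Qed.

Lemma orth S T : \sum_(x : cube n) walsh S x * walsh T x = if S == T then 2^+n else 0 :> R.
Proof.
under eq_bigr => x _ do rewrite !walshE -big_split /=.
rewrite (sum_cube_prod (fun i b => (if i \in S then (if b then -1 else 1) else 1) *
    (if i \in T then (if b then -1 else 1) else 1))).
case: eqP => [<-|neST].
  rewrite (eq_bigr (fun _ => 2)); last by move=> i _; case: (i \in S); rewrite ?mulrNN !mulr1.
  by rewrite prodr_const card_ord.
case: (pickP (fun i => (i \in S) != (i \in T))) => [i hi|hall]; last first.
  by exfalso; apply: neST; apply/setP => i; have := hall i; move/negbFE/eqP.
rewrite (bigD1 i) //=; move: hi; case: (i \in S); case: (i \in T) => //= _;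
  by rewrite ?mulr1 ?mul1r addrC subrr mul0r.
Qed.


Lemma keyK (t : R) x y :
  \sum_(S : {set 'I_n}) t^+#|S| * (walsh S x * walsh S y) =
  \prod_i (1 + t * (Defs.coord x i * Defs.coord y i)).
Proof.
under [RHS]eq_bigr => i _ do rewrite addrC.
rewrite (@bigA_distr _ _ _ _ _ _ (fun i => t * (Defs.coord x i * Defs.coord y i)) (fun _ => 1)).
apply: eq_bigr => J _; rewrite -big_mkcond /= !big_split /= prodr_const.
by rewrite /walsh.
Qed.

Lemma prod_id x y :
  \prod_i (1 + Defs.coord x i * Defs.coord y i) = if x == y then 2^+n else 0 :> R.
Proof.
case: eqP => [<-|nxy].
  rewrite (eq_bigr (fun _ => 2)); last by move=> i _; rewrite coord_mul.
  by rewrite prodr_const card_ord.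
case: (pickP (fun i => x i != y i)) => [i hi|hall]; last first.
  by exfalso; apply: nxy; apply/ffunP => i; have := hall i; move/negbFE/eqP.
rewrite (bigD1 i) //=; move: hi; rewrite /Defs.coord; case: (x i); case: (y i) => //= _;
  by rewrite ?mulr1 ?mul1r ?mulN1r subrr mul0r.
Qed.

Lemma K1 x y : \sum_(S : {set 'I_n}) walsh S x * walsh S y = if x == y then 2^+n else 0 :> R.
Proof.
have := keyK 1 x y.
rewrite (eq_bigr (fun i => 1 + Defs.coord x i * Defs.coord y i)); last by move=> i _; rewrite mul1r.
rewrite prod_id => <-; apply: eq_bigr => S _; by rewrite expr1n mul1r.
Qed.

Lemma fhatB f g S : fhat (fun x => f x - g x) S = fhat f S - fhat g S.
Proof.
rewrite /fhat -mulrBr; congr (_ * _); rewrite -sumrB; apply: eq_bigr => x _.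
by rewrite mulrBl.
Qed.

Lemma parseval h : \sum_(S : {set 'I_n}) fhat h S ^+ 2 = (2^+n)^-1 * \sum_(x : cube n) h x ^+ 2.
Proof.
have e S : fhat h S ^+ 2 = (2^+n)^-1 ^+ 2 *
    \sum_(x : cube n) \sum_(y : cube n) h x * h y * (walsh S x * walsh S y).
  rewrite /fhat exprMn; congr (_ * _); rewrite expr2 big_distrl /=.
  apply: eq_bigr => x _; rewrite big_distrr /=; apply: eq_bigr => y _; ring.
under eq_bigr => S _ do rewrite e.
rewrite -mulr_sumr exchange_big /=.
under eq_bigr => x _ do rewrite exchange_big /=.
under eq_bigr => x _ do under eq_bigr => y _ do rewrite -mulr_sumr K1.
have hs x : \sum_(y : cube n) h x * h y * (if x == y then 2^+n else 0) = h x ^+ 2 * 2^+n.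
  rewrite (bigD1 x) //= eqxx big1 ?addr0 ?expr2 //.
  by move=> y /negPf; rewrite eq_sym => ->; rewrite mulr0.
under eq_bigr => x _ do rewrite hs.
rewrite -mulr_suml.
have h2 : (2 ^+ n : R) != 0 by rewrite expf_neq0 // pnatr_eq0.
set Sm := \sum_(x : cube n) _.
by rewrite expr2; field.
Qed.


Lemma supnorm_ge0 f : 0 <= supnorm f.
Proof. by rewrite /supnorm; elim/big_ind: _ => // a b ha hb; rewrite le_max ha. Qed.

Lemma supnorm_ge f x : `|f x| <= supnorm f.
Proof. by rewrite /supnorm (bigD1 x) //= le_max lexx. Qed.

Lemma supnorm_le f B : 0 <= B -> (forall x, `|f x| <= B) -> supnorm f <= B.
Proof.
move=> B0 hB; rewrite /supnorm; elim/big_ind: _ => // a b ha hb.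
by rewrite ge_max ha hb.
Qed.

Lemma noise h x (t : R) : `|t| <= 1 ->
  `|\sum_(S : {set 'I_n}) fhat h S * t^+#|S| * walsh S x| <= supnorm h.
Proof.
move=> ht.
pose Pi (y : cube n) := \prod_i (1 + t * (Defs.coord x i * Defs.coord y i)).
have e : \sum_(S : {set 'I_n}) fhat h S * t^+#|S| * walsh S x =
    (2^+n)^-1 * \sum_(y : cube n) h y * Pi y.
  transitivity ((2^+n)^-1 * \sum_(S : {set 'I_n}) \sum_(y : cube n)
      h y * (t^+#|S| * (walsh S x * walsh S y))).
    rewrite mulr_sumr; apply: eq_bigr => S _; rewrite /fhat.
    rewrite !mulr_sumr !big_distrl /=; apply: eq_bigr => y _; ring.
  congr (_ * _); rewrite exchange_big /=; apply: eq_bigr => y _.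
  by rewrite -mulr_sumr keyK.
have Pi0 y : 0 <= Pi y.
  apply: prodr_ge0 => i _.
  have hc : `|Defs.coord x i * Defs.coord y i| = 1 :> R.
    by rewrite /Defs.coord; case: (x i); case: (y i); rewrite ?mulrNN ?mulr1 ?mul1r ?normrN normr1.
  have := ler_norm (- (t * (Defs.coord x i * Defs.coord y i))).
  rewrite normrN normrM hc mulr1; lra.
have sPi : \sum_(y : cube n) Pi y = 2^+n.
  rewrite /Pi /Defs.coord.
  rewrite (sum_cube_prod (fun i b => 1 + t * ((if x i then -1 else 1) * (if b then -1 else 1)))).
  rewrite (eq_bigr (fun _ => 2)) ?prodr_const ?card_ord //.
  by move=> i _; case: (x i); rewrite ?mulr1 ?mulrN1 ?mulN1r ?opprK; ring.
have h2 : (2 ^+ n : R) != 0 by rewrite expf_neq0 // pnatr_eq0.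
have h2p : 0 < (2 ^+ n : R) by rewrite exprn_gt0.
rewrite e normrM ger0_norm; last by rewrite invr_ge0 ltW.
apply: (@le_trans _ _ ((2^+n)^-1 * \sum_(y : cube n) supnorm h * Pi y)).
  apply: ler_wpM2l; first by rewrite invr_ge0 ltW.
  apply: le_trans (ler_norm_sum _ _ _) _; apply: ler_sum => y _.
  by rewrite normrM (ger0_norm (Pi0 y)); apply: ler_wpM2r => //; apply: supnorm_ge.
rewrite -mulr_sumr sPi; rewrite mulrC -mulrA mulrV ?mulr1 //.
by rewrite unitfE.
Qed.

Lemma fhat_low h d S :
  fhat (fun x => \sum_(T : {set 'I_n} | (#|T| <= d)%N) fhat h T * walsh T x) S =
  if (#|S| <= d)%N then fhat h S else 0.
Proof.
set F := fhat h.
rewrite /fhat.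
under eq_bigr => x _ do rewrite big_distrl /=.
rewrite exchange_big /=.
under eq_bigr => T _ do (under eq_bigr => x _ do rewrite -mulrA; rewrite -mulr_sumr orth).
have h2 : (2 ^+ n : R) != 0 by rewrite expf_neq0 // pnatr_eq0.
case: leqP => hS.
  rewrite (bigD1 S) //= eqxx big1 ?addr0; last first.
    by move=> T /andP[_ /negPf ->]; rewrite mulr0.
  by rewrite mulrCA mulVf // mulr1.
rewrite big1 ?mulr0 // => T hT.
have -> : (T == S) = false.
  by apply/negP => /eqP e; move: hT; rewrite e leqNgt hS.
by rewrite mulr0.
Qed.


Lemma group_deg (G : {set 'I_n} -> R) (t : R) :
  \sum_(S : {set 'I_n}) G S * t^+#|S| =
  \sum_(l < n.+1) (\sum_(S : {set 'I_n} | #|S| == l) G S) * t^+l.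
Proof.
rewrite (partition_big (fun S : {set 'I_n} => (inord #|S| : 'I_n.+1)) xpredT) //=.
apply: eq_bigr => l _; rewrite big_distrl /=.
have hS (S : {set 'I_n}) : (inord #|S| == l :> 'I_n.+1) = (#|S| == l).
  rewrite -val_eqE /= inordK // ltnS; apply: leq_trans (max_card _) _.
  by rewrite card_ord.
apply: eq_big => S; rewrite /= hS //.
by move=> /eqP ->.
Qed.

Lemma low_deg (G : {set 'I_n} -> R) d :
  \sum_(S : {set 'I_n} | (#|S| <= d)%N) G S =
  \sum_(l < n.+1 | (l < d.+1)%N) \sum_(S : {set 'I_n} | #|S| == l) G S.
Proof.
rewrite (partition_big (fun S : {set 'I_n} => (inord #|S| : 'I_n.+1)) (fun l : 'I_n.+1 => (l < d.+1)%N)) /=.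
  apply: eq_bigr => l hl; apply: eq_bigl => S.
  have -> : (inord #|S| == l :> 'I_n.+1) = (#|S| == l).
    rewrite -val_eqE /= inordK // ltnS; apply: leq_trans (max_card _) _.
    by rewrite card_ord.
  by case: eqP => [->|]; rewrite ?andbT ?andbF.
move=> S hS; rewrite inordK // ltnS; apply: leq_trans (max_card _) _.
by rewrite card_ord.
Qed.

End Cube.

Local Open Scope classical_set_scope.
Local Open Scope ring_scope.

Theorem lemma2p2 (R : realType) (n k d : nat) :
  (0 < d)%N -> (d <= k)%N -> (k <= n)%N ->
  forall f : cube n -> R, deg_le f k ->
  Num.max (l2_low f d) ((@sigma R k d)^-1 * lp_low (bh_exp d) f d)
  <= inf [set supnorm (fun x => f x - g x) |
            g in [set g : cube n -> R | high_deg g d /\ deg_le g k]].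
Proof.
move=> d0 dk kn f hf.
apply: lb_le_inf.
  exists (supnorm (fun x => f x - 0)), (fun _ => 0) => //.
  have z S : fhat (fun _ : cube n => 0 : R) S = 0.
    by rewrite /fhat big1 ?mulr0 // => x _; rewrite mul0r.
  by split => S _; apply: z.
move=> _ [g [hg1 hg2] <-].
set h := fun x => f x - g x.
set M := supnorm h.
have M0 : 0 <= M by apply: supnorm_ge0.
have fh (S : {set 'I_n}) : (#|S| <= d)%N -> fhat f S = fhat h S.
  by move=> hS; rewrite /h fhatB hg1 // subr0.
have hdeg : deg_le h k by move=> S hS; rewrite /h fhatB hf // hg2 // subr0.
have h2p : 0 < (2 ^+ n : R) by rewrite exprn_gt0.
rewrite ge_max; apply/andP; split.
  rewrite /l2_low -(ger0_norm M0) -sqrtr_sqr ler_sqrt ?sqr_ge0 //.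
  apply: (@le_trans _ _ (\sum_(S : {set 'I_n}) fhat h S ^+ 2)).
    rewrite [X in _ <= X](bigID (fun S : {set 'I_n} => (#|S| <= d)%N)) /=.
    rewrite -[X in X <= _]addr0; apply: lerD.
      by apply: ler_sum => S hS; rewrite fh.
    by apply: sumr_ge0 => S _; apply: sqr_ge0.
  rewrite parseval.
  apply: (@le_trans _ _ ((2 ^+ n)^-1 * \sum_(x : cube n) M ^+ 2)).
    apply: ler_wpM2l; first by rewrite invr_ge0 ltW.
    apply: ler_sum => x _; rewrite -(ger0_norm (sqr_ge0 (h x))) normrX.
    have := @supnorm_ge _ _ h x; have := normr_ge0 (h x); rewrite -/M; nra.
  rewrite sumr_const card_ffun card_bool card_ord -[M ^+ 2 *+ _]mulr_natr natrX.
  by rewrite mulrCA mulVf ?mulr1 // gt_eqF.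
pose r := fun x => \sum_(T : {set 'I_n} | (#|T| <= d)%N) fhat h T * walsh T x.
have fr S : fhat r S = if (#|S| <= d)%N then fhat h S else 0 by apply: fhat_low.
have rdeg : deg_le r d by move=> S hS; rewrite fr leqNgt hS.
have lpeq : lp_low (bh_exp d) r d = lp_low (bh_exp d) f d.
  rewrite /lp_low; congr (_ `^ _); apply: eq_bigr => S hS.
  by rewrite fr hS fh.
pose C := \sum_(l < d.+1) `|@cheb_ct R k l|.
have C0 : 0 <= C by apply: sumr_ge0 => l _; apply: normr_ge0.
have Sr : supnorm r <= C * M.
  apply: supnorm_le; first by apply: mulr_ge0.
  move=> x.
  pose a l := \sum_(S : {set 'I_n} | #|S| == l) fhat h S * walsh S x.
  have rx : r x = \sum_(l < n.+1 | (l < d.+1)%N) a l.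
    exact: (@low_deg R n (fun S => fhat h S * walsh S x) d).
  pose p := \poly_(l < n.+1) a l.
  have sp : (size p <= k.+1)%N.
    apply/leq_sizeP => j hj; rewrite coef_poly; case: (j < n.+1)%N; last reflexivity.
    rewrite /a; apply: big1 => S /eqP hS.
    have hkS : (k < #|S|)%N by rewrite hS.
    by rewrite (hdeg S hkS) mul0r.
  have hp t : -1 <= t <= 1 -> `|p.[t]| <= M.
    move=> /andP[t1 t2].
    have ht : `|t| <= 1 by rewrite ler_norml t1 t2.
    have := @noise R n h x t ht; rewrite -/M.
    suff -> : p.[t] = \sum_(S : {set 'I_n}) fhat h S * t ^+ #|S| * walsh S x by [].
    rewrite horner_poly.
    under [RHS]eq_bigr => S _ do rewrite mulrAC.
    symmetry; exact: (@group_deg R n (fun S => fhat h S * walsh S x) t).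
  have ha l : (l <= d)%N -> `|a l| <= M * `|@cheb_ct R k l|.
    move=> hl.
    have hln : (l < n.+1)%N by rewrite ltnS; apply: leq_trans hl (leq_trans dk kn).
    have := @markov R p k l M sp (leq_trans hl dk) hp.
    by rewrite coef_poly hln.
  rewrite rx; apply: le_trans (ler_norm_sum _ _ _) _.
  rewrite mulrC /C mulr_sumr.
  rewrite (big_ord_widen_cond (n.+1) (fun _ => true) (fun l => M * `|@cheb_ct R k l|)); last first.
    by rewrite ltnS; apply: leq_trans dk kn.
  by apply: ler_sum => l hl; apply: ha.
set L := lp_low (bh_exp d) f d.
have L0 : 0 <= L by apply: powR_ge0.
case: (eqVneq (@sigma R k d) 0) => hs.
  rewrite hs invr0 mul0r; exact: M0.
have BHne : @BH R d != 0.
  apply: contraNneq hs => e; rewrite /sigma e mul0r; exact: eqxx.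
have [[B hB]|nB] := pselect (exists B, @BH_consts R d B); last first.
  exfalso.
  have E : @BH_consts R d = set0.
    apply/seteqP; split => [B hB|B hB]; last by case: hB.
    by exfalso; apply: nB; exists B; exact: hB.
  by move: BHne; rewrite /BH E inf0 eqxx.
have hBr := hB n (leq_trans dk kn) r rdeg; rewrite lpeq -/L in hBr.
have Sr0 := @supnorm_ge0 _ _ r.
case: (eqVneq (supnorm r) 0) => hr0.
  rewrite hr0 mulr0 in hBr.
  have -> : L = 0 by apply/eqP; rewrite eq_le hBr L0.
  rewrite mulr0; exact: M0.
have rpos : 0 < supnorm r by rewrite lt_def hr0 Sr0.
have lb : L / supnorm r <= @BH R d.
  apply: lb_le_inf; first by exists B.
  move=> B' hB'; have := hB' n (leq_trans dk kn) r rdeg; rewrite lpeq -/L => H.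
  rewrite ler_pdivrMr; last exact: rpos.
  exact: H.
have BH0 : 0 <= @BH R d.
  apply: le_trans lb; apply: divr_ge0; [exact: L0 | exact: Sr0].
have sig0 : 0 < @sigma R k d.
  rewrite lt_def hs /=; apply: mulr_ge0; [exact: BH0 | exact: C0].
rewrite mulrC ler_pdivrMr; last exact: sig0.
rewrite /sigma -/C.
rewrite ler_pdivrMr in lb; last exact: rpos.
apply: (le_trans lb); apply: (le_trans (ler_wpM2l BH0 Sr)).
rewrite mulrA mulrC; exact: lexx.
Qed.
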